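(* For every natural number $n \geq 0$, $$G_n = \sum_{1 \leq \ell \leq k \leq n} (-1)^{k-1} (\ell-1)!\,(k-\ell)!\, S(n,k).$$ In particular, $G_n$ is an integer for every $n \in \mathbb{N}$.
   Context: The Genocchi numbers $G_n$ ($n \in \mathbb{N}$) are defined by the exponential generating function $\frac{2x}{e^x+1} = \sum_{n=0}^{\infty} G_n \frac{x^n}{n!}$. The Stirling numbers of the second kind $S(n,k)$ ($0 \le k \le n$) are the integers defined by the polynomial identity $X^n = \sum_{k=0}^{n} S(n,k)\, X(X-1)\cdots(X-k+1)$. (For $n=0$ the sum is empty and the claim reads $G_0 = 0$.) *)

(* Defs.v *)
From mathcomp Require Import all_boot all_order all_algebra.
Set Implicit Arguments. Unset Strict Implicit. Unset Printing Implicit Defensive.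
Import Order.TTheory GRing.Theory Num.Theory.
Local Open Scope ring_scope.

(* Formal power series over rat are represented by their coefficient
   sequences nat -> rat; product is the Cauchy product. *)
Definition fps_mul (f g : nat -> rat) (n : nat) : rat :=
  \sum_(i < n.+1) f i * g (n - i)%N.

Definition egf (a : nat -> rat) (n : nat) : rat := a n / (n`!)%:R.

Definition exp_plus_one (n : nat) : rat := 1 / (n`!)%:R + (n == 0%N)%:R.

Definition two_x (n : nat) : rat := if n == 1%N then 2 else 0.

(* G is the sequence of Genocchi numbers:
   2x/(e^x+1) = sum G_n x^n/n!, i.e. (e^x+1) * egf G = 2x as formal power
   series (e^x + 1 has invertible constant term 2). *)
Definition is_genocchi (G : nat -> rat) : Prop :=
  forall n, fps_mul exp_plus_one (egf G) n = two_x n.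

Definition falling (k : nat) : {poly int} := \prod_(i < k) ('X - (i%:R)%:P).

Definition is_stirling2 (S : nat -> nat -> int) : Prop :=
  forall n, 'X^n = \sum_(k < n.+1) S n k *: falling k.

Definition genocchi_formula (S : nat -> nat -> int) (n : nat) : int :=
  \sum_(1 <= k < n.+1) \sum_(1 <= l < k.+1)
     (-1) ^+ (k - 1)%N * ((l - 1)`!)%:Z * ((k - l)`!)%:Z * S n k.

(* Main.v *)
Require Import Defs.
From mathcomp Require Import all_boot all_order all_algebra ring zify lra.
Import Order.TTheory GRing.Theory Num.Theory.
Local Open Scope ring_scope.

Lemma fallingS k : falling k.+1 = falling k * ('X - (k%:R)%:P).
Proof. by rewrite /falling big_ord_recr. Qed.

Lemma size_falling k : size (falling k) = k.+1.
Proof. by rewrite /falling size_prod_XsubC /index_enum -enumT size_enum_ord. Qed.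

Lemma lead_falling k : lead_coef (falling k) = 1.
Proof. by apply/eqP; rewrite -monicE /falling monic_prod_XsubC. Qed.

Lemma coef_falling k i : (k <= i)%N -> (falling k)`_i = (i == k)%:R.
Proof.
rewrite leq_eqVlt => /orP[/eqP->|lt]; first by rewrite eqxx -(lead_falling i) lead_coefE size_falling.
rewrite nth_default ?size_falling //; by rewrite gtn_eqF.
Qed.

Lemma falling_coef0 k : (falling k.+1)`_0 = 0.
Proof.
elim: k => [|k IH]; rewrite fallingS mulrBr coefB coefMX coefMC /=.
  by rewrite /falling big_ord0 mulr0 subr0.
by rewrite IH mul0r subr0.
Qed.

Lemma falling_coef1 k : (falling k.+1)`_1 = (-1) ^+ k * (k`!)%:R.
Proof.
elim: k => [|k IH].
  by rewrite fallingS /falling big_ord0 mul1r coefB coefX coefC.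
rewrite fallingS mulrBr coefB coefMX coefMC /= falling_coef0 IH.
rewrite factS natrM exprS; ring.
Qed.

Lemma falling_comp k :
  falling k.+1 \Po ('X + 1) = falling k.+1 + (k.+1)%:R *: falling k.
Proof.
elim: k => [|k IH].
  by rewrite fallingS /falling big_ord0 mul1r subr0 comp_polyX scale1r addrC.
rewrite fallingS comp_polyM IH comp_polyB comp_polyX comp_polyC.
rewrite fallingS -!mul_polyC !polyC_natr; ring.
Qed.

Definition aa (k : nat) : nat := (\sum_(j < k) j`! * (k.-1 - j)`!)%N.
Definition cc (k : nat) : int :=
  \sum_(1 <= l < k.+1) (-1) ^+ (k - 1)%N * ((l - 1)`!)%:Z * ((k - l)`!)%:Z.

Lemma cc_aa k : cc k = (-1) ^+ (k - 1)%N * (aa k)%:R.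
Proof.
rewrite /cc /aa natr_sum mulr_sumr big_add1 /= big_mkord.
apply: eq_bigr => i _; rewrite natrM mulrA !natz; congr (_ * Posz _ * Posz _).
  by rewrite subn1.
by congr (_ `!); case: k i => [|k] [i Hi] /=; lia.
Qed.

Lemma cc0 : cc 0 = 0.
Proof. by rewrite cc_aa /aa big_ord0 mulr0. Qed.

Lemma aa_rec m : (2 * aa m.+2 = m.+2 * aa m.+1 + 2 * m.+1`!)%N.
Proof.
have E1 : aa m.+2 = (\sum_(j < m.+1) j`! * (m.+1 - j)`! + m.+1`!)%N.
  by rewrite /aa big_ord_recr /= subnn fact0 muln1.
have E2 : aa m.+2 = (m.+1`! + \sum_(j < m.+1) j.+1`! * (m - j)`!)%N.
  by rewrite /aa big_ord_recl /= fact0 mul1n subn0.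
have E3 : (m.+2 * aa m.+1 = \sum_(j < m.+1) j`! * (m.+1 - j)`! +
            \sum_(j < m.+1) j.+1`! * (m - j)`!)%N.
  rewrite /aa big_distrr -big_split /=; apply: eq_bigr => -[j Hj] _ /=.
  have -> : (m.+1 - j = (m - j).+1)%N by lia.
  rewrite !factS; set d := (m - j)%N.
  have -> : (m.+2 = j.+1 + d.+1)%N by rewrite /d; lia.
  ring.
lia.
Qed.

Lemma cc_rel m :
  2 * cc m.+1 + (m.+1)%:R * cc m = 2 * ((-1) ^+ m * (m`!)%:R).
Proof.
case: m => [|m].
  by rewrite cc0 mulr0 addr0 cc_aa /aa big_ord1.
rewrite !cc_aa.
have -> : (m.+2 - 1 = m.+1)%N by [].
have -> : (m.+1 - 1 = m)%N by rewrite subn1.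
set A := (aa m.+2)%:R; set B := (aa m.+1)%:R.
set F := (m.+1`!)%:R.
have H : 2 * A = m.+2%:R * B + 2 * F.
  by rewrite /A /B /F -!natrM -natrD aa_rec.
have -> : 2 * ((-1) ^+ m.+1 * A) = (-1) ^+ m.+1 * (2 * A) by ring.
rewrite H exprS; ring.
Qed.

Section Main.
Variable S : nat -> nat -> int.
Hypothesis hS : is_stirling2 S.

Definition Fn (n : nat) : int := \sum_(k < n.+1) cc k * S n k.

Lemma formula_Fn n : genocchi_formula S n = Fn n.
Proof.
rewrite /genocchi_formula /Fn -(big_mkord xpredT (fun k => cc k * S n k)) (big_ltn (ltn0Sn n)) cc0 mul0r add0r.
by apply: eq_big_nat => k _; rewrite /cc mulr_suml.
Qed.

Definition L (p : {poly int}) : int := \sum_(i < size p) p`_i * Fn i.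

Lemma L_big N (p : {poly int}) : (size p <= N)%N -> L p = \sum_(i < N) p`_i * Fn i.
Proof.
move=> H; rewrite /L -(subnKC H) big_split_ord /= [X in _ = _ + X]big1 ?addr0 //.
by move=> i _; rewrite nth_default ?mul0r // leq_addr.
Qed.

Lemma L0 : L 0 = 0.
Proof. by rewrite /L size_poly0 big_ord0. Qed.

Lemma LD (p q : {poly int}) : L (p + q) = L p + L q.
Proof.
rewrite !(@L_big (maxn (size p) (size q))) ?size_polyD ?leq_maxl ?leq_maxr //.
by rewrite -big_split; apply: eq_bigr => i _; rewrite coefD mulrDl.
Qed.

Lemma LZ (a : int) (p : {poly int}) : L (a *: p) = a * L p.
Proof.
rewrite (@L_big (size p)) ?size_scale_leq // /L mulr_sumr.
by apply: eq_bigr => i _; rewrite coefZ mulrA.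
Qed.

Lemma L_sum m (F : 'I_m -> {poly int}) : L (\sum_(k < m) F k) = \sum_(k < m) L (F k).
Proof. exact: (big_morph L LD L0). Qed.

Lemma LXn n : L 'X^n = Fn n.
Proof.
rewrite /L size_polyXn big_ord_recr /= coefXn eqxx mul1r big1 ?add0r //.
by move=> i _; rewrite coefXn ltn_eqF ?mul0r.
Qed.

Lemma S_nn n : S n n = 1.
Proof.
have := congr1 (fun p : {poly int} => p`_n) (hS n).
rewrite coefXn eqxx coef_sum big_ord_recr /= coefZ coef_falling // eqxx mulr1.
rewrite big1 ?add0r; first by move=> <-.
by move=> i _; rewrite coefZ nth_default ?mulr0 // size_falling.
Qed.

Lemma L_falling k : L (falling k) = cc k.
Proof.
elim/ltn_ind: k => n IH.
have := congr1 L (hS n); rewrite LXn L_sum /Fn big_ord_recr [X in _ = X]big_ord_recr /=.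
rewrite LZ S_nn mulr1 mul1r.
have -> : \sum_(i < n) L (S n i *: falling i) = \sum_(k < n) cc k * S n k.
  by apply: eq_bigr => i _; rewrite LZ IH // mulrC.
by move/addrI => ->.
Qed.

Lemma key k : L (falling k \Po ('X + 1)) + L (falling k) = 2 * (falling k)`_1.
Proof.
case: k => [|m].
  rewrite /falling big_ord0 comp_polyC -(expr0 ('X : {poly int})) LXn /Fn big_ord1 cc0 mul0r.
  by rewrite coefXn.
rewrite falling_comp LD LZ !L_falling falling_coef1 -cc_rel; ring.
Qed.

Lemma main_int n : L (('X + 1) ^+ n) + L 'X^n = 2 * ('X^n : {poly int})`_1.
Proof.
rewrite -comp_Xn_poly (hS n).
rewrite (big_morph (fun p : {poly int} => p \Po ('X + 1)) (fun p q => comp_polyD p q ('X + 1)) (comp_poly0 _)).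
rewrite !L_sum coef_sum mulr_sumr -big_split.
apply: eq_bigr => k _; rewrite comp_polyZ !LZ coefZ /= -mulrDr key; ring.
Qed.

Lemma main_int2 n :
  \sum_(i < n.+1) 'C(n, i)%:R * Fn i + Fn n = 2 * (n == 1%N)%:R.
Proof.
have := main_int n; rewrite LXn coefXn exprD1n L_sum eq_sym => <-; congr (_ + _).
by apply: eq_bigr => i _; rewrite -scaler_nat LZ LXn.
Qed.

End Main.

Definition cond (G : nat -> rat) n :=
  \sum_(i < n.+1) 'C(n, i)%:R * G i + G n = 2 * (n == 1%N)%:R.

Lemma genocchi_iff G n : fps_mul exp_plus_one (egf G) n = two_x n <-> cond G n.
Proof.
have nz : (n`!)%:R != 0 :> rat by rewrite pnatr_eq0 -lt0n fact_gt0.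
have B : (n`!)%:R * two_x n = 2 * (n == 1%N)%:R.
  rewrite /two_x; case: eqP => [->|_]; last by rewrite mulr0.
  by rewrite mulr1 (_ : 1`! = 1)%N // mul1r.
have A : (n`!)%:R * fps_mul exp_plus_one (egf G) n =
         \sum_(i < n.+1) 'C(n, i)%:R * G i + G n.
  rewrite /fps_mul /exp_plus_one /egf mulr_sumr.
  rewrite (eq_bigr (fun i : 'I_n.+1 => 'C(n, n - i)%:R * G (n - i)%N +
     (n`!)%:R * ((nat_of_ord i == 0%N)%:R * (G (n - i)%N / ((n - i)`!)%:R)))); last first.
    move=> [i Hi] _ /=; rewrite mulrDl mulrDr; congr (_ + _).
    have Hi' : (i <= n)%N by [].
    rewrite bin_sub // -(bin_fact Hi') !natrM.
    have h1 : (i`!)%:R != 0 :> rat by rewrite pnatr_eq0 -lt0n fact_gt0.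
    have h2 : ((n - i)`!)%:R != 0 :> rat by rewrite pnatr_eq0 -lt0n fact_gt0.
    by field; rewrite h1 h2.
  rewrite big_split /=; congr (_ + _).
    rewrite (reindex_inj rev_ord_inj) /=; apply: eq_bigr => -[i Hi] _ /=.
    by rewrite subSS subKn // -ltnS.
  rewrite big_ord_recl /= big1 ?addr0; last by move=> i _; rewrite mul0r mulr0.
  by rewrite subn0 mul1r mulrCA mulfV // mulr1.
split => H.
  by rewrite /cond -A H B.
by apply: (mulfI nz); rewrite A B.
Qed.

Lemma cond_unique G G' : (forall n, cond G n) -> (forall n, cond G' n) ->
  forall n, G n = G' n.
Proof.
move=> HG HG'; elim/ltn_ind => n IH.
have := HG n; have := HG' n; rewrite /cond !big_ord_recr /= binn.
have -> : \sum_(i < n) 'C(n, i)%:R * G' i = \sum_(i < n) 'C(n, i)%:R * G i.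
  by apply: eq_bigr => i _; rewrite IH.
move=> h1 h2; lra.
Qed.

Theorem theorem1 (S : nat -> nat -> int) (hS : is_stirling2 S) :
  forall G : nat -> rat,
    is_genocchi G <-> (forall n : nat, G n = (genocchi_formula S n)%:~R).
Proof.
have cF : forall n, cond (fun n => (genocchi_formula S n)%:~R) n.
  move=> n; rewrite /cond.
  have := congr1 (fun x : int => x%:~R : rat) (@main_int2 S hS n).
  rewrite rmorphD rmorph_sum rmorphM /= !rmorph_nat => <-.
  rewrite (formula_Fn S); congr (_ + _); apply: eq_bigr => i _.
  by rewrite (formula_Fn S) rmorphM /= rmorph_nat.
move=> G; split.
  move=> hG; apply: cond_unique => // n; exact/genocchi_iff.
move=> hG n; apply/genocchi_iff.
have := cF n; rewrite /cond hG => <-; congr (_ + _).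
by apply: eq_bigr => i _; rewrite hG.
Qed.
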